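(* Let $T>0$ and let $\mathbf{v}=(v^1,v^2,v^3):[0,\infty)\times[0,T]\to\mathbb{R}^3$ be a smooth solution (all derivatives continuous up to $s=0$) of the initial-boundary value problem \[ \mathbf{v}_t=\mathbf{v}\times\mathbf{v}_{ss}\ (s>0,\ t>0),\qquad \mathbf{v}(s,0)=\mathbf{v}_0(s)\ (s>0),\qquad \mathbf{v}(0,t)=\mathbf{e}_3\ (t>0), \] where $\mathbf{e}_3=(0,0,1)$ and the initial datum satisfies $|\mathbf{v}_0(s)|=1$ for all $s\ge 0$. Then for every $n\in\mathbb{N}=\{1,2,\dots\}$ and every $t\in(0,T]$: \[ (C)_n:\quad \bigl(\mathbf{v}\times\partial_s^{2n}\mathbf{v}\bigr)\big|_{s=0}=\mathbf{0}, \] \[ (D)_n:\quad \bigl(\partial_s^{j}\mathbf{v}\cdot\partial_s^{l}\mathbf{v}\bigr)\big|_{s=0}=0\quad\text{for all nonnegative integers } j,l \text{ with } j+l=2n+1. \]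
   Context: $\times$ denotes the exterior (cross) product in $\mathbb{R}^3$ and $\cdot$ the Euclidean inner product; $|_{s=0}$ denotes the trace at $s=0$. *)

(* Defs.v *)
From Stdlib Require Import Reals.
From Coquelicot Require Import Coquelicot.
Open Scope R_scope.

Definition vec := (R * R * R)%type.
Definition vcomp (i : nat) (x : vec) : R :=
  match i with 0%nat => fst (fst x) | 1%nat => snd (fst x) | _ => snd x end.
Definition cross (a b : vec) : vec :=
  let '(a1, a2, a3) := a in let '(b1, b2, b3) := b in
  (a2 * b3 - a3 * b2, a3 * b1 - a1 * b3, a1 * b2 - a2 * b1).
Definition dot (a b : vec) : R :=
  let '(a1, a2, a3) := a in let '(b1, b2, b3) := b in a1 * b1 + a2 * b2 + a3 * b3.
Definition vnorm (a : vec) : R := sqrt (dot a a).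
Definition e3 : vec := (0, 0, 1).
Definition vzero : vec := (0, 0, 0).

Definition ds (f : R -> R -> R) : R -> R -> R := fun s t => Derive (fun x => f x t) s.
Definition dt (f : R -> R -> R) : R -> R -> R := fun s t => Derive (fun y => f s y) t.
Definition dsn (j : nat) (f : R -> R -> R) : R -> R -> R := Nat.iter j ds f.
Definition dtn (k : nat) (f : R -> R -> R) : R -> R -> R := Nat.iter k dt f.

Definition vfc (i : nat) (v : R -> R -> vec) : R -> R -> R := fun s t => vcomp i (v s t).
Definition Dsn (j : nat) (v : R -> R -> vec) : R -> R -> vec :=
  fun s t => (dsn j (vfc 0 v) s t, dsn j (vfc 1 v) s t, dsn j (vfc 2 v) s t).

Definition openQ (T : R) (p : R * R) : Prop := 0 < fst p /\ 0 < snd p < T.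
Definition closedQ (T : R) (p : R * R) : Prop := 0 <= fst p /\ 0 <= snd p <= T.

Definition cont_on_closedQ (T : R) (g : R -> R -> R) : Prop :=
  forall p, closedQ T p ->
    filterlim (fun q : R * R => g (fst q) (snd q)) (within (closedQ T) (locally p))
      (locally (g (fst p) (snd p))).

(* v is smooth on [0,oo) x [0,T], all derivatives continuous up to the boundary:
   v is continuous on the closed region; in the open region all partial
   derivatives d_s^j d_t^k v exist (t-derivatives first, then s-derivatives)
   and are jointly continuous; and each of them extends continuously to the
   closed region.  (By Schwarz, this is C^oo in the interior.) *)
Definition smooth_up_to_boundary (T : R) (v : R -> R -> vec) : Prop :=
  (forall i : nat, (i < 3)%nat -> cont_on_closedQ T (vfc i v)) /\
  (forall (i j k : nat), (i < 3)%nat -> forall s t, openQ T (s, t) ->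
     ex_derive (fun x => dsn j (dtn k (vfc i v)) x t) s /\
     ex_derive (fun y => dtn k (vfc i v) s y) t /\
     filterlim (fun q : R * R => dsn j (dtn k (vfc i v)) (fst q) (snd q))
       (locally (s, t)) (locally (dsn j (dtn k (vfc i v)) s t))) /\
  (forall (i j k : nat), (i < 3)%nat -> exists g : R -> R -> R,
     cont_on_closedQ T g /\
     forall s t, openQ T (s, t) -> g s t = dsn j (dtn k (vfc i v)) s t).

(* Trace at s = 0 of a scalar function of s (t fixed): right limit at 0. *)
Definition trace0_is (f : R -> R) (l : R) : Prop :=
  filterlim f (at_right 0) (locally l).

(* Main.v *)
Require Import Defs.
From Stdlib Require Import Reals Lra Lia.
From Coquelicot Require Import Coquelicot.
From Stdlib Require Import IndefiniteDescription.
Open Scope R_scope.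

Lemma tr_eps (F : R -> R) l :
  trace0_is F l <-> forall eps, 0 < eps -> exists d, 0 < d /\ forall s, 0 < s < d -> Rabs (F s - l) < eps.
Proof.
  unfold trace0_is. rewrite filterlim_locally. split.
  - intros H eps He. destruct (H (mkposreal eps He)) as [d Hd].
    exists d. split. apply cond_pos. intros s [H1 H2]. apply (Hd s).
    change (Rabs (s - 0) < d). rewrite Rminus_0_r, Rabs_right; lra. exact H1.
  - intros H eps. destruct (H eps (cond_pos eps)) as [d [Hd H2]].
    exists (mkposreal d Hd). intros s Hs Hs0. apply H2.
    change (Rabs (s - 0) < d) in Hs. rewrite Rminus_0_r, Rabs_right in Hs; lra.
Qed.

Lemma tr_plus F G a b : trace0_is F a -> trace0_is G b -> trace0_is (fun s => F s + G s) (a + b).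
Proof. intros HF HG. eapply filterlim_comp_2; [exact HF | exact HG | apply (@filterlim_plus R_AbsRing R_NormedModule)]. Qed.

Lemma tr_mult F G a b : trace0_is F a -> trace0_is G b -> trace0_is (fun s => F s * G s) (a * b).
Proof. intros HF HG. eapply filterlim_comp_2; [exact HF | exact HG | apply (@filterlim_mult R_AbsRing)]. Qed.

Lemma tr_const a : trace0_is (fun _ => a) a.
Proof. apply filterlim_const. Qed.

Lemma tr_opp F a : trace0_is F a -> trace0_is (fun s => - F s) (- a).
Proof. intros HF. replace (-a) with ((-1) * a) by ring.
  eapply filterlim_ext. 2: apply tr_mult; [apply tr_const | exact HF]. intros; simpl; ring. Qed.

Lemma tr_minus F G a b : trace0_is F a -> trace0_is G b -> trace0_is (fun s => F s - G s) (a - b).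
Proof. intros. apply tr_plus; auto. apply tr_opp; auto. Qed.

Lemma tr_ext F G a : (forall s, 0 < s -> F s = G s) -> trace0_is F a -> trace0_is G a.
Proof. intros He HF. apply tr_eps. intros eps Heps. rewrite tr_eps in HF. destruct (HF eps Heps) as [d [Hd H]].
  exists d. split; auto. intros s Hs. rewrite <- He by lra. auto. Qed.

Lemma tr_unique F a b : trace0_is F a -> trace0_is F b -> a = b.
Proof. intros. eapply (@filterlim_locally_unique _ R_AbsRing R_NormedModule). 2: eassumption. 2: eassumption.
  apply Proper_StrongProper. apply at_right_proper_filter. Qed.

Lemma tr_sum (F : nat -> R -> R) (a : nat -> R) n :
  (forall j, (j <= n)%nat -> trace0_is (F j) (a j)) -> trace0_is (fun s => sum_f_R0 (fun j => F j s) n) (sum_f_R0 a n).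
Proof. induction n; intros H; simpl. apply H; lia. apply tr_plus. apply IHn; intros; apply H; lia. apply H; lia. Qed.


Definition Sm (F : R -> R) := forall j x, 0 < x -> ex_derive (Derive_n F j) x.

Lemma loc_pos x : 0 < x -> locally x (fun y => 0 < y).
Proof. intros. apply (open_gt 0). exact H. Qed.

Lemma Sm_loc F n x : Sm F -> 0 < x -> locally x (fun y => forall k, (k <= n)%nat -> ex_derive_n F k y).
Proof. intros HF Hx. eapply filter_imp. 2: apply loc_pos, Hx. intros y Hy k _. destruct k; simpl; auto. Qed.

Lemma Dn_plus F G n x : Sm F -> Sm G -> 0 < x -> Derive_n (fun y => F y + G y) n x = Derive_n F n x + Derive_n G n x.
Proof. intros. apply Derive_n_plus; apply Sm_loc; auto. Qed.
Lemma Dn_minus F G n x : Sm F -> Sm G -> 0 < x -> Derive_n (fun y => F y - G y) n x = Derive_n F n x - Derive_n G n x.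
Proof. intros. apply Derive_n_minus; apply Sm_loc; auto. Qed.

Lemma Sm_plus F G : Sm F -> Sm G -> Sm (fun y => F y + G y).
Proof. intros HF HG j x Hx. eapply ex_derive_ext_loc.
  eapply filter_imp. 2: apply loc_pos, Hx. intros y Hy. symmetry. apply Dn_plus; auto.
  exact (ex_derive_plus (Derive_n F j) (Derive_n G j) x (HF j x Hx) (HG j x Hx)). Qed.
Lemma Sm_minus F G : Sm F -> Sm G -> Sm (fun y => F y - G y).
Proof. intros HF HG j x Hx. eapply ex_derive_ext_loc.
  eapply filter_imp. 2: apply loc_pos, Hx. intros y Hy. symmetry. apply Dn_minus; auto.
  exact (ex_derive_minus (Derive_n F j) (Derive_n G j) x (HF j x Hx) (HG j x Hx)). Qed.
Lemma Sm_Dn F k : Sm F -> Sm (Derive_n F k).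
Proof. intros HF j x Hx. eapply ex_derive_ext. intros y. symmetry. apply Derive_n_comp. apply HF; auto. Qed.

Fixpoint L (m j : nat) : R :=
  match m with
  | O => match j with O => 1 | _ => 0 end
  | S m' => L m' j + match j with O => 0 | S j' => L m' j' end
  end.

Lemma L_big m j : (m < j)%nat -> L m j = 0.
Proof. revert j; induction m; intros j H; simpl. destruct j; [lia | auto].
  destruct j. lia. rewrite !IHm by lia. ring. Qed.
Lemma L_0 m : L m 0 = 1.
Proof. induction m; simpl; auto. rewrite IHm; ring. Qed.
Lemma L_diag m : L m m = 1.
Proof. induction m; simpl; auto. rewrite IHm, L_big by lia. ring. Qed.

Lemma L_shift (a b : nat -> R) m :
  sum_f_R0 (fun j => L m j * (a (S j) * b (m - j)%nat + a j * b (S (m - j)))) m =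
  sum_f_R0 (fun j => L (S m) j * (a j * b (S m - j)%nat)) (S m).
Proof.
  rewrite (sum_eq (fun j => L (S m) j * (a j * b (S m - j)%nat)) (fun j => L m j * (a j * b (S m - j)%nat) + (match j with O => 0 | S j' => L m j' end) * (a j * b (S m - j)%nat))).
  2: intros; simpl L; ring.
  rewrite sum_plus. rewrite tech5. rewrite (L_big m (S m)) by lia.
  rewrite (decomp_sum _ (S m)) by lia. simpl pred.
  rewrite (sum_eq (fun j => L m j * (a (S j) * b (m - j)%nat + a j * b (S (m - j))))
     (fun j => L m j * (a (S j) * b (m - j)%nat) + L m j * (a j * b (S m - j)%nat))).
  2: { intros i Hi. replace (S m - i)%nat with (S (m - i)) by lia. ring. }
  rewrite sum_plus. rewrite !Rmult_0_l, Rplus_0_r, Rplus_0_l. rewrite Rplus_comm. reflexivity.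
Qed.

Lemma sum_derive (f : nat -> R -> R) (df : nat -> R) n x :
  (forall j, (j <= n)%nat -> is_derive (f j) x (df j)) ->
  is_derive (fun y => sum_f_R0 (fun j => f j y) n) x (sum_f_R0 df n).
Proof. induction n; intros H; simpl. apply H; lia.
  refine (is_derive_plus (fun y => sum_f_R0 (fun j => f j y) n) (f (S n)) x _ _ _ _).
  apply IHn; intros; apply H; lia. apply H; lia. Qed.

Lemma isd_mult f g x df dg : is_derive f x df -> is_derive g x dg -> is_derive (fun y => f y * g y) x (df * g x + f x * dg).
Proof. intros Hf Hg. apply is_derive_Reals. apply is_derive_Reals in Hf. apply is_derive_Reals in Hg.
  exact (derivable_pt_lim_mult f g x df dg Hf Hg). Qed.
Lemma isd_scal c f x df : is_derive f x df -> is_derive (fun y => c * f y) x (c * df).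
Proof. intros Hf. apply is_derive_Reals. apply is_derive_Reals in Hf.
  exact (derivable_pt_lim_scal f c x df Hf). Qed.

Lemma leib_aux F G : Sm F -> Sm G -> forall m x, 0 < x ->
  is_derive (fun y => sum_f_R0 (fun j => L m j * (Derive_n F j y * Derive_n G (m - j) y)) m) x
    (sum_f_R0 (fun j => L (S m) j * (Derive_n F j x * Derive_n G (S m - j) x)) (S m)).
Proof.
  intros HF HG m x Hx. rewrite <- (L_shift (fun j => Derive_n F j x) (fun j => Derive_n G j x)).
  apply (sum_derive (fun j y => L m j * (Derive_n F j y * Derive_n G (m - j) y))). intros j Hj.
  apply isd_scal. apply isd_mult; apply Derive_correct; [apply HF | apply HG]; exact Hx.
Qed.

Lemma leib F G : Sm F -> Sm G -> forall m x, 0 < x ->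
  Derive_n (fun y => F y * G y) m x = sum_f_R0 (fun j => L m j * (Derive_n F j x * Derive_n G (m - j) x)) m.
Proof.
  intros HF HG m. induction m; intros x Hx. simpl. ring.
  change (Derive (Derive_n (fun y => F y * G y) m) x = sum_f_R0 (fun j => L (S m) j * (Derive_n F j x * Derive_n G (S m - j) x)) (S m)).
  rewrite (Derive_ext_loc _ (fun y => sum_f_R0 (fun j => L m j * (Derive_n F j y * Derive_n G (m - j) y)) m)).
  apply is_derive_unique, leib_aux; auto.
  eapply filter_imp. 2: apply loc_pos, Hx. intros y Hy. apply IHm, Hy.
Qed.

Lemma Sm_mult F G : Sm F -> Sm G -> Sm (fun y => F y * G y).
Proof. intros HF HG j x Hx. eapply ex_derive_ext_loc.
  eapply filter_imp. 2: apply loc_pos, Hx. intros y Hy. symmetry. apply leib; auto.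
  eexists. apply leib_aux; auto. Qed.


Lemma cq_eps T g a b : cont_on_closedQ T g -> closedQ T (a,b) ->
  forall eps, 0 < eps -> exists d, 0 < d /\ forall x y, closedQ T (x,y) -> Rabs (x - a) < d -> Rabs (y - b) < d ->
    Rabs (g x y - g a b) < eps.
Proof.
  intros Hg Hab eps He. specialize (Hg (a,b) Hab). rewrite filterlim_locally in Hg.
  specialize (Hg (mkposreal eps He)). unfold within in Hg. destruct Hg as [d Hd].
  exists d. split. apply cond_pos. intros x y Hxy H1 H2.
  specialize (Hd (x,y)). simpl in Hd. apply Hd; auto. split; assumption.
Qed.

Lemma agree T g1 g2 a b : cont_on_closedQ T g1 -> cont_on_closedQ T g2 -> closedQ T (a,b) ->
  (forall eps, 0 < eps -> exists x y, closedQ T (x,y) /\ Rabs (x - a) < eps /\ Rabs (y - b) < eps /\ g1 x y = g2 x y) ->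
  g1 a b = g2 a b.
Proof.
  intros H1 H2 Hab Hp. destruct (Req_dec (g1 a b) (g2 a b)) as [E|E]; auto. exfalso.
  assert (Hd : 0 < Rabs (g1 a b - g2 a b)) by (apply Rabs_pos_lt; lra).
  set (d := Rabs (g1 a b - g2 a b)) in *.
  destruct (cq_eps T g1 a b H1 Hab (d/2)) as [d1 [Hd1 P1]]. lra.
  destruct (cq_eps T g2 a b H2 Hab (d/2)) as [d2 [Hd2 P2]]. lra.
  destruct (Hp (Rmin d1 d2)) as [x [y [Hq [Hx [Hy Heq]]]]]. apply Rmin_pos; auto.
  specialize (P1 x y Hq). specialize (P2 x y Hq).
  assert (A1 : Rabs (g1 x y - g1 a b) < d/2) by (apply P1; eapply Rlt_le_trans; eauto; [apply Rmin_l | apply Rmin_l]).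
  assert (A2 : Rabs (g2 x y - g2 a b) < d/2) by (apply P2; eapply Rlt_le_trans; eauto; [apply Rmin_r | apply Rmin_r]).
  rewrite Heq in A1. unfold d in *.
  assert (Rabs (g1 a b - g2 a b) <= Rabs (g2 x y - g1 a b) + Rabs (g2 x y - g2 a b)).
  { replace (g1 a b - g2 a b) with (-(g2 x y - g1 a b) + (g2 x y - g2 a b)) by ring.
    eapply Rle_trans. apply Rabs_triang. rewrite Rabs_Ropp. lra. }
  lra.
Qed.

Lemma pts_open T a b eps : 0 < T -> closedQ T (a,b) -> 0 < eps ->
  exists x y, openQ T (x,y) /\ Rabs (x - a) < eps /\ Rabs (y - b) < eps.
Proof.
  intros HT [Ha Hb] He. simpl in Ha, Hb.
  set (h := Rmin (eps/2) (T/2)).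
  assert (h1 : h <= eps/2) by apply Rmin_l. assert (h2 : h <= T/2) by apply Rmin_r.
  assert (h3 : 0 < h) by (apply Rmin_pos; lra).
  exists (a + eps/2). destruct (Rle_dec b (T/2)).
  - exists (b + h/2). unfold openQ; simpl. repeat split; try lra.
    rewrite Rabs_right; lra. rewrite Rabs_right; lra.
  - exists (b - h/2). unfold openQ; simpl. repeat split; try lra.
    rewrite Rabs_right; lra. rewrite Rabs_left; lra.
Qed.

Lemma cont_2d_of g s t :
  filterlim (fun q : R * R => g (fst q) (snd q)) (locally (s, t)) (locally (g s t)) ->
  continuity_2d_pt g s t.
Proof. intros H. apply continuity_2d_pt_filterlim. exact H. Qed.

Lemma cont_t_of (g : R -> R -> R) s t :
  filterlim (fun q : R * R => g (fst q) (snd q)) (locally (s, t)) (locally (g s t)) ->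
  @continuous R_UniformSpace R_UniformSpace (fun y => g s y) t.
Proof. intros H. unfold continuous. apply filterlim_locally. intros eps. pose proof (proj1 (filterlim_locally _ _) H eps) as H2. clear H. rename H2 into H.
  destruct H as [d Hd]. exists d. intros y Hy. apply (Hd (s,y)). split. apply ball_center. exact Hy. Qed.

Lemma tr_of_G T g t F : cont_on_closedQ T g -> 0 <= t <= T -> (forall s, 0 < s -> F s = g s t) ->
  trace0_is F (g 0 t).
Proof.
  intros Hg Ht HF. unfold trace0_is. rewrite filterlim_locally. intros eps.
  destruct (cq_eps T g 0 t Hg) with (eps := pos eps) as [d [Hd P]]. split; simpl; lra. apply cond_pos.
  exists (mkposreal d Hd). intros s Hs Hs0. rewrite HF by auto.
  change (Rabs (g s t - g 0 t) < eps). apply P. split; simpl; lra.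
  change (Rabs (s - 0) < d) in Hs. exact Hs. rewrite Rminus_diag, Rabs_R0. exact Hd.
Qed.


Lemma isd_cont_pt f x l : is_derive f x l -> continuity_pt f x.
Proof. intros H. apply continuity_pt_filterlim. apply (ex_derive_continuous f x). exists l; exact H. Qed.

Lemma deriv_edge T g0 g1 s : 0 < T -> cont_on_closedQ T g0 -> cont_on_closedQ T g1 ->
  (forall x t, openQ T (x,t) -> is_derive (fun y => g0 y t) x (g1 x t)) -> 0 < s ->
  is_derive (fun y => g0 y T) s (g1 s T).
Proof.
  intros HT H0 H1 Hd Hs. apply is_derive_Reals. intros eps He.
  destruct (cq_eps T g1 s T H1) with (eps := eps/2) as [d1 [Hd1 P1]]. split; simpl; lra. lra.
  assert (Hdel : 0 < Rmin d1 (s/2)) by (apply Rmin_pos; lra).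
  exists (mkposreal _ Hdel). intros h Hh0 Hh. simpl in Hh.
  assert (Hh1 : Rabs h < d1) by (eapply Rlt_le_trans; [exact Hh | apply Rmin_l]).
  assert (Hh2 : Rabs h < s/2) by (eapply Rlt_le_trans; [exact Hh | apply Rmin_r]).
  assert (Hah : 0 < Rabs h) by (apply Rabs_pos_lt; exact Hh0).
  set (eta := Rabs h * eps / 8).
  assert (Heta : 0 < eta) by (unfold eta; apply Rmult_lt_0_compat; [apply Rmult_lt_0_compat|]; lra).
  destruct (cq_eps T g0 (s+h) T H0) with (eps := eta) as [d2 [Hd2 P2]].
  { split; simpl; try lra. destruct (Rcase_abs h); [rewrite Rabs_left in Hh2 | rewrite Rabs_right in Hh2]; lra. } exact Heta.
  destruct (cq_eps T g0 s T H0) with (eps := eta) as [d3 [Hd3 P3]]. split; simpl; lra. exact Heta.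
  set (m := Rmin (Rmin d1 d2) (Rmin d3 T)).
  assert (Hm : 0 < m) by (unfold m; repeat apply Rmin_pos; lra).
  assert (m1 : m <= d1) by (unfold m; eapply Rle_trans; apply Rmin_l).
  assert (m2 : m <= d2) by (unfold m; eapply Rle_trans; [apply Rmin_l | apply Rmin_r]).
  assert (m3 : m <= d3) by (unfold m; eapply Rle_trans; [apply Rmin_r | apply Rmin_l]).
  assert (m4 : m <= T) by (unfold m; eapply Rle_trans; apply Rmin_r).
  set (t := T - m/2).
  assert (Htm : Rabs (t - T) < m) by (unfold t; rewrite Rabs_left; lra).
  assert (Ht : 0 < t < T) by (unfold t; lra).
  assert (Hbnd : forall x, Rmin s (s+h) <= x <= Rmax s (s+h) -> s/2 < x /\ Rabs (x - s) <= Rabs h).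
  { intros x Hx. unfold Rmin, Rmax in Hx. destruct (Rle_dec s (s+h)).
    - assert (E1 : Rabs h = h) by (apply Rabs_right; lra). rewrite E1 in *.
      assert (E2 : Rabs (x - s) = x - s) by (apply Rabs_right; lra). rewrite E2. lra.
    - assert (E1 : Rabs h = - h) by (apply Rabs_left; lra). rewrite E1 in *.
      destruct (Rcase_abs (x - s)); [rewrite Rabs_left | rewrite Rabs_right]; lra. }
  destruct (MVT_gen (fun y => g0 y t) s (s+h) (fun y => g1 y t)) as [c [Hc Hmvt]].
  { intros x Hx. apply Hd. assert (Hx' : Rmin s (s+h) <= x <= Rmax s (s+h)) by lra.
    destruct (Hbnd x Hx'). split; simpl; lra. }
  { intros x Hx. destruct (Hbnd x Hx). apply (isd_cont_pt _ _ (g1 x t)). apply Hd. split; simpl; lra. }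
  simpl in Hmvt. destruct (Hbnd c Hc) as [Hc1 Hc2].
  assert (A1 : Rabs (g1 c t - g1 s T) < eps/2) by (apply P1; [split; simpl; lra | lra | lra]).
  assert (A2 : Rabs (g0 (s+h) t - g0 (s+h) T) < eta) by (apply P2; [split; simpl; try lra | rewrite Rminus_diag, Rabs_R0; lra | lra];
     destruct (Rcase_abs h); [rewrite Rabs_left in Hh2 | rewrite Rabs_right in Hh2]; lra).
  assert (A3 : Rabs (g0 s t - g0 s T) < eta) by (apply P3; [split; simpl; lra | rewrite Rminus_diag, Rabs_R0; lra | lra]).
  assert (Key : Rabs (g0 (s+h) T - g0 s T - h * g1 s T) < Rabs h * eps).
  { replace (g0 (s+h) T - g0 s T - h * g1 s T) with
      (- (g0 (s+h) t - g0 (s+h) T) + (g0 s t - g0 s T) + h * (g1 c t - g1 s T)).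
    2: { replace (s + h - s) with h in Hmvt by ring. rewrite Rmult_minus_distr_l. lra. }
    eapply Rle_lt_trans. eapply Rle_trans. apply Rabs_triang. apply Rplus_le_compat_r. apply Rabs_triang.
    rewrite Rabs_Ropp, Rabs_mult.
    assert (Rabs h * Rabs (g1 c t - g1 s T) <= Rabs h * (eps/2)) by (apply Rmult_le_compat_l; lra).
    unfold eta in *. lra. }
  replace ((g0 (s+h) T - g0 s T) / h - g1 s T) with ((g0 (s+h) T - g0 s T - h * g1 s T) / h) by (field; exact Hh0).
  unfold Rdiv. rewrite Rabs_mult, Rabs_Rinv by exact Hh0.
  apply (Rmult_lt_reg_r (Rabs h)); auto. rewrite Rmult_assoc, Rinv_l by lra. lra.
Qed.


Definition GOK T v (G : nat -> nat -> nat -> R -> R -> R) := forall i j k, (i < 3)%nat ->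
  cont_on_closedQ T (G i j k) /\ forall s t, openQ T (s,t) -> G i j k s t = dsn j (dtn k (vfc i v)) s t.

Lemma dsn_Dn j g x t : dsn j g x t = Derive_n (fun y => g y t) j x.
Proof. revert x. induction j; intros x. reflexivity.
  change (Derive (fun y => dsn j g y t) x = Derive (Derive_n (fun y => g y t) j) x).
  apply Derive_ext. intros; apply IHj. Qed.

Lemma Sm_of T v i k t : smooth_up_to_boundary T v -> (i < 3)%nat -> 0 < t < T ->
  Sm (fun x => dtn k (vfc i v) x t).
Proof. intros [_ [Hd _]] Hi Ht j x Hx. eapply ex_derive_ext. intros y; apply dsn_Dn.
  apply (Hd i j k Hi x t). split; simpl; lra. Qed.

Lemma K1 T v G i m k t : GOK T v G -> (i < 3)%nat -> 0 < t < T ->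
  trace0_is (fun s => dsn m (dtn k (vfc i v)) s t) (G i m k 0 t).
Proof. intros HG Hi Ht. apply tr_of_G with T. apply HG; auto. lra.
  intros s Hs. symmetry. apply HG; auto. split; simpl; lra. Qed.

Lemma K6 T v G i : 0 < T -> smooth_up_to_boundary T v -> GOK T v G -> (i < 3)%nat ->
  forall j s, 0 < s -> dsn j (vfc i v) s T = G i j 0%nat s T.
Proof.
  intros HT Hs HG Hi. pose proof Hs as [Hc [Hd _]]. induction j; intros s Hs0.
  - simpl. apply (agree T (vfc i v) (G i 0%nat 0%nat) s T); auto. apply HG; auto. split; simpl; lra.
    intros eps He. destruct (pts_open T s T eps) as [x [y [Hxy [H1 H2]]]]; auto. split; simpl; lra.
    exists x, y. repeat split; auto; try (destruct Hxy; simpl in *; lra).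
    symmetry. apply HG; auto.
  - change (Derive (fun x => dsn j (vfc i v) x T) s = G i (S j) 0%nat s T).
    rewrite (Derive_ext_loc _ (fun x => G i j 0%nat x T)).
    2: { eapply filter_imp. 2: apply loc_pos, Hs0. intros y Hy. apply IHj, Hy. }
    apply is_derive_unique. apply deriv_edge; auto. apply HG; auto. apply HG; auto.
    intros x t Hxt. rewrite (proj2 (HG i (S j) 0%nat Hi) x t Hxt).
    eapply is_derive_ext_loc. 2: apply Derive_correct; apply (Hd i j 0%nat Hi x t Hxt).
    destruct Hxt as [Hx Ht]. simpl in Hx, Ht.
    eapply filter_imp. 2: apply loc_pos, Hx. intros y Hy. symmetry. apply HG; auto. split; simpl; lra.
Qed.

Lemma dsn_eq_G T v G i m s t : 0 < T -> smooth_up_to_boundary T v -> GOK T v G -> (i < 3)%nat ->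
  0 < t <= T -> 0 < s -> dsn m (vfc i v) s t = G i m 0%nat s t.
Proof. intros HT Hs HG Hi Ht Hs0. destruct (Req_dec t T) as [E|E].
  - subst t. apply K6; auto.
  - symmetry. destruct (HG i m 0%nat Hi) as [_ H]. apply H. split; simpl; lra. Qed.

Definition Av (G : nat -> nat -> nat -> R -> R -> R) m t : vec := (G 0%nat m 0%nat 0 t, G 1%nat m 0%nat 0 t, G 2%nat m 0%nat 0 t).

Definition trv (F : R -> vec) (a : vec) := forall p, (p < 3)%nat -> trace0_is (fun s => vcomp p (F s)) (vcomp p a).

Lemma Dsn_trv T v G m t : 0 < T -> smooth_up_to_boundary T v -> GOK T v G -> 0 < t <= T ->
  trv (fun s => Dsn m v s t) (Av G m t).
Proof. intros HT Hs HG Ht p Hp.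
  assert (forall i, (i < 3)%nat -> trace0_is (fun s => dsn m (vfc i v) s t) (G i m 0%nat 0 t)).
  { intros i Hi. apply tr_of_G with T. apply HG; auto. lra. intros; apply dsn_eq_G with T; auto. }
  destruct p as [|[|[|p]]]; simpl; try (apply H; lia). Qed.

Lemma v_eta (v : R -> R -> vec) s t : v s t = Dsn 0 v s t.
Proof. unfold Dsn, dsn, vfc. simpl. destruct (v s t) as [[a b] c]; reflexivity. Qed.

Lemma vcomp_cross0 x y : vcomp 0 (cross x y) = vcomp 1 x * vcomp 2 y - vcomp 2 x * vcomp 1 y.
Proof. destruct x as [[a b] c]; destruct y as [[d e] f]; reflexivity. Qed.
Lemma vcomp_cross1 x y : vcomp 1 (cross x y) = vcomp 2 x * vcomp 0 y - vcomp 0 x * vcomp 2 y.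
Proof. destruct x as [[a b] c]; destruct y as [[d e] f]; reflexivity. Qed.
Lemma vcomp_cross2 x y : vcomp 2 (cross x y) = vcomp 0 x * vcomp 1 y - vcomp 1 x * vcomp 0 y.
Proof. destruct x as [[a b] c]; destruct y as [[d e] f]; reflexivity. Qed.
Lemma dot_c x y : dot x y = vcomp 0 x * vcomp 0 y + vcomp 1 x * vcomp 1 y + vcomp 2 x * vcomp 2 y.
Proof. destruct x as [[a b] c]; destruct y as [[d e] f]; reflexivity. Qed.

Lemma trv_cross F G a b : trv F a -> trv G b -> forall i, (i < 3)%nat ->
  trace0_is (fun s => vcomp i (cross (F s) (G s))) (vcomp i (cross a b)).
Proof. intros HF HG i Hi. destruct i as [|[|[|i]]]; [| | | lia].
  - rewrite vcomp_cross0. eapply tr_ext. 2: apply tr_minus; apply tr_mult; [apply HF | apply HG | apply HF | apply HG]; lia.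
    intros; rewrite vcomp_cross0; reflexivity.
  - rewrite vcomp_cross1. eapply tr_ext. 2: apply tr_minus; apply tr_mult; [apply HF | apply HG | apply HF | apply HG]; lia.
    intros; rewrite vcomp_cross1; reflexivity.
  - rewrite vcomp_cross2. eapply tr_ext. 2: apply tr_minus; apply tr_mult; [apply HF | apply HG | apply HF | apply HG]; lia.
    intros; rewrite vcomp_cross2; reflexivity.
Qed.

Lemma trv_dot F G a b : trv F a -> trv G b ->
  trace0_is (fun s => dot (F s) (G s)) (dot a b).
Proof. intros HF HG. rewrite dot_c. eapply tr_ext. 2: apply tr_plus; [apply tr_plus|]; apply tr_mult;
  solve [apply HF; lia | apply HG; lia]. intros; rewrite dot_c; reflexivity. Qed.


Lemma cq_mult T g h : cont_on_closedQ T g -> cont_on_closedQ T h -> cont_on_closedQ T (fun x y => g x y * h x y).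
Proof. intros Hg Hh p Hp.
  exact (filterlim_comp_2 _ _ Rmult (Hg p Hp) (Hh p Hp) (@filterlim_mult R_AbsRing _ _)). Qed.
Lemma cq_plus T g h : cont_on_closedQ T g -> cont_on_closedQ T h -> cont_on_closedQ T (fun x y => g x y + h x y).
Proof. intros Hg Hh p Hp.
  exact (filterlim_comp_2 _ _ Rplus (Hg p Hp) (Hh p Hp) (@filterlim_plus R_AbsRing R_NormedModule _ _)). Qed.
Lemma cq_const T c : cont_on_closedQ T (fun _ _ => c).
Proof. intros p Hp. apply filterlim_const. Qed.

Lemma isd_plus f g x df dg : is_derive f x df -> is_derive g x dg -> is_derive (fun y => f y + g y) x (df + dg).
Proof. intros Hf Hg. apply is_derive_Reals. apply is_derive_Reals in Hf. apply is_derive_Reals in Hg.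
  exact (derivable_pt_lim_plus f g x df dg Hf Hg). Qed.

Lemma K3 T v v0 : 0 < T -> smooth_up_to_boundary T v ->
  (forall s t, openQ T (s, t) -> forall i : nat, (i < 3)%nat ->
       dt (vfc i v) s t = vcomp i (cross (v s t) (Dsn 2 v s t))) ->
  (forall s, 0 < s -> v s 0 = v0 s) ->
  (forall s, 0 <= s -> vnorm (v0 s) = 1) ->
  forall s t, openQ T (s,t) -> dot (v s t) (v s t) = 1.
Proof.
  intros HT Hsm Heq Hinit Hunit s t [Hs Ht]. simpl in Hs, Ht. pose proof Hsm as [Hc [Hd _]].
  set (Phi := fun x y => vfc 0 v x y * vfc 0 v x y + vfc 1 v x y * vfc 1 v x y + vfc 2 v x y * vfc 2 v x y).
  assert (HP : forall x y, dot (v x y) (v x y) = Phi x y) by (intros; rewrite dot_c; reflexivity).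
  assert (Hder : forall y, 0 < y < T -> is_derive (fun z => Phi s z) y 0).
  { intros y Hy.
    assert (E : forall i, (i < 3)%nat -> is_derive (fun z => vfc i v s z) y (vcomp i (cross (v s y) (Dsn 2 v s y)))).
    { intros i Hi. rewrite <- Heq by (auto; split; simpl; lra). apply Derive_correct.
      apply (Hd i 0%nat 0%nat Hi s y). split; simpl; lra. }
    pose proof (isd_plus _ _ _ _ _ (isd_plus _ _ _ _ _ (isd_mult _ _ _ _ _ (E 0%nat ltac:(lia)) (E 0%nat ltac:(lia)))
       (isd_mult _ _ _ _ _ (E 1%nat ltac:(lia)) (E 1%nat ltac:(lia)))) (isd_mult _ _ _ _ _ (E 2%nat ltac:(lia)) (E 2%nat ltac:(lia)))) as HH.
    match type of HH with is_derive _ _ ?l => replace 0 with l end. exact HH.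
    unfold vfc. generalize (v s y) (Dsn 2 v s y). intros [[a b] c] [[d e] f]. simpl. ring. }
  assert (Hconst : forall y, 0 < y < T -> Phi s y = Phi s t).
  { intros y Hy. destruct (MVT_gen (fun z => Phi s z) t y (fun _ => 0)) as [c [Hc1 Hc2]].
    - intros x Hx. apply Hder. unfold Rmin, Rmax in Hx. destruct (Rle_dec t y); lra.
    - intros x Hx. apply (isd_cont_pt _ _ 0). apply Hder. unfold Rmin, Rmax in Hx. destruct (Rle_dec t y); lra.
    - simpl in Hc2. lra. }
  assert (Hcont : cont_on_closedQ T Phi).
  { unfold Phi. repeat apply cq_plus; apply cq_mult; apply Hc; lia. }
  assert (H0 : Phi s 0 = Phi s t).
  { apply (agree T Phi (fun _ _ => Phi s t) s 0); auto. apply cq_const. split; simpl; lra.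
    intros eps He. exists s, (Rmin eps T / 2).
    assert (0 < Rmin eps T) by (apply Rmin_pos; lra). pose proof (Rmin_l eps T). pose proof (Rmin_r eps T).
    repeat split; simpl; try lra. rewrite Rminus_diag, Rabs_R0; lra. rewrite Rminus_0_r, Rabs_right; lra.
    apply Hconst. lra. }
  rewrite HP, <- H0, <- HP, Hinit by lra.
  specialize (Hunit s ltac:(lra)). unfold vnorm in Hunit.
  assert (Hge : 0 <= dot (v0 s) (v0 s)) by (destruct (v0 s) as [[a b] c]; simpl; nra).
  rewrite <- (sqrt_sqrt _ Hge), Hunit. ring.
Qed.


Lemma vcomp_Av G p m t : (p < 3)%nat -> vcomp p (Av G m t) = G p m 0%nat 0 t.
Proof. intros Hp. destruct p as [|[|[|p]]]; try reflexivity. lia. Qed.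

Lemma trDn T v G i j t : GOK T v G -> (i < 3)%nat -> 0 < t < T ->
  trace0_is (fun x => Derive_n (fun y => vfc i v y t) j x) (G i j 0%nat 0 t).
Proof. intros HG Hi Ht. eapply tr_ext. 2: apply (K1 T v G i j 0%nat t); auto.
  intros; apply dsn_Dn. Qed.

Lemma SmF T v i t : smooth_up_to_boundary T v -> (i < 3)%nat -> 0 < t < T -> Sm (fun x => vfc i v x t).
Proof. intros. exact (Sm_of T v i 0%nat t H H0 H1). Qed.

Lemma K4 T v v0 G : 0 < T -> smooth_up_to_boundary T v ->
  (forall s t, openQ T (s, t) -> forall i : nat, (i < 3)%nat ->
       dt (vfc i v) s t = vcomp i (cross (v s t) (Dsn 2 v s t))) ->
  (forall s, 0 < s -> v s 0 = v0 s) ->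
  (forall s, 0 <= s -> vnorm (v0 s) = 1) -> GOK T v G ->
  forall m t, (1 <= m)%nat -> 0 < t < T ->
  sum_f_R0 (fun j => L m j * dot (Av G j t) (Av G (m - j) t)) m = 0.
Proof.
  intros HT Hsm Heq Hinit Hunit HG m t Hm Ht.
  set (F0 := fun x => vfc 0 v x t). set (F1 := fun x => vfc 1 v x t). set (F2 := fun x => vfc 2 v x t).
  assert (S0 : Sm F0) by (apply (SmF T); auto; lia).
  assert (S1 : Sm F1) by (apply (SmF T); auto; lia).
  assert (S2 : Sm F2) by (apply (SmF T); auto; lia).
  assert (Hx : forall x, 0 < x -> sum_f_R0 (fun j => L m j * (Derive_n F0 j x * Derive_n F0 (m-j) x
      + Derive_n F1 j x * Derive_n F1 (m-j) x + Derive_n F2 j x * Derive_n F2 (m-j) x)) m = 0).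
  { intros x Hx.
    assert (D : Derive_n (fun y => F0 y * F0 y + F1 y * F1 y + F2 y * F2 y) m x = 0).
    { rewrite (Derive_n_ext_loc _ (fun _ => 1)). destruct m. lia. apply Derive_n_const.
      eapply filter_imp. 2: apply loc_pos, Hx. intros y Hy.
      rewrite <- (K3 T v v0 HT Hsm Heq Hinit Hunit y t) by (split; simpl; lra).
      rewrite dot_c. reflexivity. }
    rewrite (Dn_plus (fun y => F0 y * F0 y + F1 y * F1 y) (fun y => F2 y * F2 y)) in D;
      [ | apply Sm_plus; apply Sm_mult; auto | apply Sm_mult; auto | auto].
    rewrite (Dn_plus (fun y => F0 y * F0 y) (fun y => F1 y * F1 y)) in D; [ | apply Sm_mult; auto | apply Sm_mult; auto | auto].
    rewrite (leib F0 F0), (leib F1 F1), (leib F2 F2) in D by auto.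
    rewrite <- D. rewrite <- !sum_plus. apply sum_eq. intros; ring. }
  assert (Htr : trace0_is (fun x => sum_f_R0 (fun j => L m j * (Derive_n F0 j x * Derive_n F0 (m-j) x
      + Derive_n F1 j x * Derive_n F1 (m-j) x + Derive_n F2 j x * Derive_n F2 (m-j) x)) m)
      (sum_f_R0 (fun j => L m j * dot (Av G j t) (Av G (m - j) t)) m)).
  { apply (tr_sum (fun j x => L m j * (Derive_n F0 j x * Derive_n F0 (m-j) x
      + Derive_n F1 j x * Derive_n F1 (m-j) x + Derive_n F2 j x * Derive_n F2 (m-j) x))).
    intros j Hj. rewrite dot_c, !vcomp_Av by lia. apply tr_mult. apply tr_const.
    repeat apply tr_plus; apply tr_mult; apply (trDn T); auto; lia. }
  apply (tr_unique _ _ _ Htr). eapply tr_ext. 2: apply tr_const. intros s Hs. symmetry. apply Hx, Hs.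
Qed.

Lemma cross_jet Fp Fq m x : Sm Fp -> Sm Fq -> 0 < x ->
  Derive_n (fun y => Fp y * Derive_n Fq 2 y - Fq y * Derive_n Fp 2 y) m x =
  sum_f_R0 (fun j => L m j * (Derive_n Fp j x * Derive_n Fq (m - j + 2) x - Derive_n Fq j x * Derive_n Fp (m - j + 2) x)) m.
Proof. intros Hp Hq Hx.
  assert (Sp2 : Sm (Derive_n Fp 2)) by (apply Sm_Dn; auto).
  assert (Sq2 : Sm (Derive_n Fq 2)) by (apply Sm_Dn; auto).
  pose proof (Dn_minus (fun y => Fp y * Derive_n Fq 2 y) (fun y => Fq y * Derive_n Fp 2 y) m x
    (Sm_mult _ _ Hp Sq2) (Sm_mult _ _ Hq Sp2) Hx) as E. cbv beta in E. rewrite E. clear E.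
  pose proof (leib Fp (Derive_n Fq 2) Hp Sq2 m x Hx) as E1. rewrite E1. clear E1.
  pose proof (leib Fq (Derive_n Fp 2) Hq Sp2 m x Hx) as E1. rewrite E1. clear E1.
  rewrite <- minus_sum. apply sum_eq. intros j Hj. rewrite !Derive_n_comp. ring.
Qed.

Lemma K5gen T v G i p q : 0 < T -> smooth_up_to_boundary T v ->
  (forall s t, openQ T (s, t) -> forall i : nat, (i < 3)%nat ->
       dt (vfc i v) s t = vcomp i (cross (v s t) (Dsn 2 v s t))) -> GOK T v G ->
  (i < 3)%nat -> (p < 3)%nat -> (q < 3)%nat ->
  (forall a b, vcomp i (cross a b) = vcomp p a * vcomp q b - vcomp q a * vcomp p b) ->
  forall m t, 0 < t < T ->
  G i m 1%nat 0 t = sum_f_R0 (fun j => L m j * vcomp i (cross (Av G j t) (Av G (m - j + 2) t))) m.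
Proof.
  intros HT Hsm Heq HG Hi Hp Hq Hc m t Ht.
  set (Fp := fun x => vfc p v x t). set (Fq := fun x => vfc q v x t).
  assert (Sp : Sm Fp) by (apply (SmF T); auto). assert (Sq : Sm Fq) by (apply (SmF T); auto).
  assert (Hx : forall x, 0 < x -> dsn m (dtn 1 (vfc i v)) x t =
     sum_f_R0 (fun j => L m j * (Derive_n Fp j x * Derive_n Fq (m - j + 2) x - Derive_n Fq j x * Derive_n Fp (m - j + 2) x)) m).
  { intros x Hx. rewrite <- cross_jet by auto. rewrite dsn_Dn. apply Derive_n_ext_loc.
    eapply filter_imp. 2: apply loc_pos, Hx. intros y Hy.
    change (dt (vfc i v) y t = Fp y * Derive_n Fq 2 y - Fq y * Derive_n Fp 2 y).
    rewrite Heq by (auto; split; simpl; lra). rewrite Hc. unfold Fp, Fq. rewrite <- !dsn_Dn.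
    destruct p as [|[|[|]]]; destruct q as [|[|[|]]]; try lia; reflexivity. }
  apply (tr_unique (fun x => dsn m (dtn 1 (vfc i v)) x t)). apply (K1 T); auto.
  eapply tr_ext. intros s Hs. symmetry. apply Hx, Hs.
  apply (tr_sum (fun j x => L m j * (Derive_n Fp j x * Derive_n Fq (m - j + 2) x - Derive_n Fq j x * Derive_n Fp (m - j + 2) x))).
  intros j Hj. rewrite Hc, !vcomp_Av by auto. apply tr_mult. apply tr_const.
  apply tr_minus; apply tr_mult; apply (trDn T); auto.
Qed.

Lemma K5 T v G i : 0 < T -> smooth_up_to_boundary T v ->
  (forall s t, openQ T (s, t) -> forall i : nat, (i < 3)%nat ->
       dt (vfc i v) s t = vcomp i (cross (v s t) (Dsn 2 v s t))) -> GOK T v G ->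
  (i < 3)%nat -> forall m t, 0 < t < T ->
  G i m 1%nat 0 t = sum_f_R0 (fun j => L m j * vcomp i (cross (Av G j t) (Av G (m - j + 2) t))) m.
Proof.
  intros HT Hsm Heq HG Hi. destruct i as [|[|[|i]]].
  - apply (K5gen T v G 0 1 2); auto. apply vcomp_cross0.
  - apply (K5gen T v G 1 2 0); auto. apply vcomp_cross1.
  - apply (K5gen T v G 2 0 1); auto. apply vcomp_cross2.
  - lia.
Qed.


Lemma Hrep T v i t1 t2 : smooth_up_to_boundary T v -> (i < 3)%nat -> 0 < t1 -> t1 < t2 < T ->
  forall k y, 0 < y -> Derive_n (fun x => vfc i v x t2 - vfc i v x t1) k y =
    RInt (fun tau => dsn k (dtn 1 (vfc i v)) y tau) t1 t2.
Proof.
  intros Hsm Hi Ht1 Ht2. pose proof Hsm as [Hc [Hd He]].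
  assert (Hb : forall tau, Rmin t1 t2 <= tau <= Rmax t1 t2 -> t1 <= tau <= t2).
  { intros tau H. unfold Rmin, Rmax in H. destruct (Rle_dec t1 t2); lra. }
  induction k; intros y Hy.
  - change (vfc i v y t2 - vfc i v y t1 = RInt (Derive (fun z => vfc i v y z)) t1 t2).
    rewrite RInt_Derive. reflexivity.
    + intros x Hx. apply Hb in Hx. apply (Hd i 0%nat 0%nat Hi y x). split; simpl; lra.
    + intros x Hx. apply Hb in Hx. apply (cont_t_of (dsn 0 (dtn 1 (vfc i v))) y x).
      apply (Hd i 0%nat 1%nat Hi y x). split; simpl; lra.
  - change (Derive (Derive_n (fun x => vfc i v x t2 - vfc i v x t1) k) y =
            RInt (fun tau => Derive (fun u => dsn k (dtn 1 (vfc i v)) u tau) y) t1 t2).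
    rewrite (Derive_ext_loc _ (fun x => RInt (fun tau => dsn k (dtn 1 (vfc i v)) x tau) t1 t2)).
    2: { eapply filter_imp. 2: apply loc_pos, Hy. intros x Hx. apply IHk, Hx. }
    apply is_derive_unique. apply (is_derive_RInt_param (fun u tau => dsn k (dtn 1 (vfc i v)) u tau)).
    + eapply filter_imp. 2: apply loc_pos, Hy. intros x Hx tau Htau. apply Hb in Htau.
      apply (Hd i k 1%nat Hi x tau). split; simpl; lra.
    + intros tau Htau. apply Hb in Htau. apply (cont_2d_of (dsn (S k) (dtn 1 (vfc i v)))).
      apply (Hd i (S k) 1%nat Hi y tau). split; simpl; lra.
    + eapply filter_imp. 2: apply loc_pos, Hy. intros x Hx. apply (@ex_RInt_continuous R_CompleteNormedModule).
      intros tau Htau. apply Hb in Htau. apply (cont_t_of (dsn k (dtn 1 (vfc i v))) x tau).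
      apply (Hd i k 1%nat Hi x tau). split; simpl; lra.
Qed.

Lemma K7 T v G i m c : 0 < T -> smooth_up_to_boundary T v -> GOK T v G -> (i < 3)%nat ->
  (forall t, 0 < t < T -> G i m 0%nat 0 t = c) -> forall t1, 0 < t1 < T -> G i m 1%nat 0 t1 = 0.
Proof.
  intros HT Hsm HG Hi Hconst t1 Ht1. pose proof Hsm as [Hc [Hd He]].
  set (W := G i m 1%nat 0 t1).
  destruct (Req_dec W 0) as [E|E]; auto. exfalso.
  assert (HW : 0 < Rabs W) by (apply Rabs_pos_lt; exact E).
  set (eps := Rabs W / 4). assert (Heps : 0 < eps) by (unfold eps; lra).
  destruct (cq_eps T (G i m 1%nat) 0 t1 (proj1 (HG i m 1%nat Hi))) with (eps := eps) as [dl [Hdl P]].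
  split; simpl; lra. exact Heps.
  set (t2 := t1 + Rmin dl (T - t1) / 2).
  assert (Hm1 : 0 < Rmin dl (T - t1)) by (apply Rmin_pos; lra).
  pose proof (Rmin_l dl (T - t1)). pose proof (Rmin_r dl (T - t1)).
  assert (Ht2 : t1 < t2 < T) by (unfold t2; lra).
  assert (Ht21 : t2 - t1 < dl) by (unfold t2; lra).
  assert (Hdiff : forall y, 0 < y -> dsn m (vfc i v) y t2 - dsn m (vfc i v) y t1 =
     RInt (fun tau => dsn m (dtn 1 (vfc i v)) y tau) t1 t2).
  { intros y Hy. rewrite !dsn_Dn.
    pose proof (Dn_minus (fun x => vfc i v x t2) (fun x => vfc i v x t1) m y) as D. cbv beta in D.
    rewrite <- D. apply (Hrep T); auto; lra.
    apply (SmF T); auto; lra. apply (SmF T); auto; lra. exact Hy. }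
  assert (Hbound : forall y, 0 < y < dl ->
     Rabs (RInt (fun tau => dsn m (dtn 1 (vfc i v)) y tau) t1 t2 - (t2 - t1) * W) <= (t2 - t1) * eps).
  { intros y Hy.
    assert (Hex : ex_RInt (fun tau => dsn m (dtn 1 (vfc i v)) y tau) t1 t2).
    { apply (@ex_RInt_continuous R_CompleteNormedModule). intros tau Htau.
      assert (t1 <= tau <= t2) by (unfold Rmin, Rmax in Htau; destruct (Rle_dec t1 t2); lra).
      apply (cont_t_of (dsn m (dtn 1 (vfc i v))) y tau). apply (Hd i m 1%nat Hi y tau). split; simpl; lra. }
    assert (Hex2 : ex_RInt (fun tau => dsn m (dtn 1 (vfc i v)) y tau - W) t1 t2).
    { apply (ex_RInt_minus (V := R_NormedModule)). exact Hex. apply ex_RInt_const. }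
    pose proof (RInt_minus (V := R_CompleteNormedModule) (fun tau => dsn m (dtn 1 (vfc i v)) y tau) (fun _ => W) t1 t2 Hex (ex_RInt_const _ _ _)) as R1.
    rewrite RInt_const in R1.
    change (RInt (fun tau => dsn m (dtn 1 (vfc i v)) y tau - W) t1 t2 =
            RInt (fun tau => dsn m (dtn 1 (vfc i v)) y tau) t1 t2 - (t2 - t1) * W) in R1.
    rewrite <- R1. apply abs_RInt_le_const. lra. exact Hex2.
    intros tau Htau. left. unfold W.
    rewrite <- (proj2 (HG i m 1%nat Hi) y tau) by (split; simpl; lra).
    apply P. split; simpl; lra. rewrite Rminus_0_r, Rabs_right; lra.
    rewrite Rabs_right; lra. }
  assert (Htr : trace0_is (fun s => dsn m (vfc i v) s t2 - dsn m (vfc i v) s t1) (c - c)).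
  { rewrite <- (Hconst t2) at 1 by lra. rewrite <- (Hconst t1) by lra.
    apply tr_minus; apply (K1 T v G i m 0%nat); auto; lra. }
  rewrite Rminus_diag in Htr. rewrite tr_eps in Htr.
  destruct (Htr ((t2 - t1) * eps)) as [d [Hd0 Pd]]. apply Rmult_lt_0_compat; lra.
  set (y := Rmin d dl / 2).
  assert (Hy0 : 0 < Rmin d dl) by (apply Rmin_pos; lra).
  pose proof (Rmin_l d dl). pose proof (Rmin_r d dl).
  specialize (Pd y ltac:(unfold y; lra)). specialize (Hbound y ltac:(unfold y; lra)).
  rewrite Rminus_0_r, Hdiff in Pd by (unfold y; lra).
  assert (Htri : Rabs ((t2 - t1) * W) <= Rabs (RInt (fun tau => dsn m (dtn 1 (vfc i v)) y tau) t1 t2) +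
     Rabs (RInt (fun tau => dsn m (dtn 1 (vfc i v)) y tau) t1 t2 - (t2 - t1) * W)).
  { set (Q := RInt (fun tau => dsn m (dtn 1 (vfc i v)) y tau) t1 t2).
    replace ((t2 - t1) * W) with (Q - (Q - (t2 - t1) * W)) at 1 by ring.
    eapply Rle_trans. apply Rabs_triang. rewrite Rabs_Ropp. lra. }
  rewrite Rabs_mult, (Rabs_right (t2 - t1)) in Htri by lra.
  assert (Hfin : (t2 - t1) * Rabs W < (t2 - t1) * (4 * eps) / 2) by lra.
  unfold eps in Hfin. nra.
Qed.


Definition par (G : nat -> nat -> nat -> R -> R -> R) m t :=
  if Nat.even m then (G 0%nat m 0%nat 0 t = 0 /\ G 1%nat m 0%nat 0 t = 0) else G 2%nat m 0%nat 0 t = 0.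

Lemma ev_true n k : n = (2 * k)%nat -> Nat.even n = true.
Proof. intros ->. apply Nat.even_spec. exists k. reflexivity. Qed.
Lemma ev_false n k : n = (2 * k + 1)%nat -> Nat.even n = false.
Proof. intros ->. rewrite <- Nat.negb_odd. rewrite (proj2 (Nat.odd_spec _)). reflexivity. exists k; reflexivity. Qed.
Lemma ev_cases n : (exists k, n = (2 * k)%nat /\ Nat.even n = true) \/ (exists k, n = (2 * k + 1)%nat /\ Nat.even n = false).
Proof. destruct (Nat.Even_or_Odd n) as [[k Hk]|[k Hk]]. left; exists k; split; auto; eapply ev_true; eauto.
  right; exists k; split; auto; eapply ev_false; eauto. Qed.

Lemma sum_mid (a : nat -> R) n : (0 < n)%nat -> (forall j, (0 < j < n)%nat -> a j = 0) -> sum_f_R0 a n = a 0%nat + a n.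
Proof. induction n; intros Hn H. lia. destruct n. simpl. reflexivity.
  rewrite tech5, IHn by (lia || (intros; apply H; lia)). rewrite (H (S n)) by lia. ring. Qed.
Lemma sum_first (a : nat -> R) n : (forall j, (0 < j <= n)%nat -> a j = 0) -> sum_f_R0 a n = a 0%nat.
Proof. induction n; intros H. reflexivity. rewrite tech5, IHn by (intros; apply H; lia). rewrite (H (S n)) by lia. ring. Qed.

Lemma dot_par G j l t : par G j t -> par G l t -> Nat.even (j + l) = false -> dot (Av G j t) (Av G l t) = 0.
Proof. unfold par. intros Hj Hl He. rewrite Nat.even_add in He. unfold Av, dot.
  destruct (Nat.even j), (Nat.even l); simpl in He; try discriminate.
  - destruct Hj as [A B]. rewrite A, B, Hl. ring.
  - destruct Hl as [A B]. rewrite A, B, Hj. ring. Qed.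

Lemma cross_par G j l t : par G j t -> par G l t -> Nat.even (j + l) = true ->
  vcomp 0 (cross (Av G j t) (Av G l t)) = 0 /\ vcomp 1 (cross (Av G j t) (Av G l t)) = 0.
Proof. unfold par. intros Hj Hl He. rewrite Nat.even_add in He. unfold Av; simpl.
  destruct (Nat.even j), (Nat.even l); simpl in He; try discriminate.
  - destruct Hj as [A B]. destruct Hl as [C D]. rewrite A, B, C, D. split; ring.
  - rewrite Hj, Hl. split; ring. Qed.

Lemma A0 T v G i t : 0 < T -> smooth_up_to_boundary T v -> GOK T v G -> (i < 3)%nat ->
  (forall t, 0 < t <= T -> v 0 t = e3) -> 0 < t <= T -> G i 0%nat 0%nat 0 t = vcomp i e3.
Proof. intros HT Hsm HG Hi Hbd Ht. pose proof Hsm as [Hc _].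
  transitivity (vfc i v 0 t). 2: unfold vfc; rewrite Hbd; auto.
  apply (agree T); auto. apply HG; auto. split; simpl; lra.
  intros eps He. destruct (pts_open T 0 t eps) as [x [y [Hxy [H1 H2]]]]; auto. split; simpl; lra.
  exists x, y. repeat split; auto; try (destruct Hxy; simpl in *; lra).
  apply HG; auto.
Qed.

Lemma parity T v v0 G : 0 < T -> smooth_up_to_boundary T v ->
  (forall s t, openQ T (s, t) -> forall i : nat, (i < 3)%nat ->
       dt (vfc i v) s t = vcomp i (cross (v s t) (Dsn 2 v s t))) ->
  (forall s, 0 < s -> v s 0 = v0 s) ->
  (forall t, 0 < t <= T -> v 0 t = e3) ->
  (forall s, 0 <= s -> vnorm (v0 s) = 1) -> GOK T v G ->
  forall M t, 0 < t < T -> forall m, (m <= M)%nat -> par G m t.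
Proof.
  intros HT Hsm Heq Hinit Hbd Hunit HG.
  assert (HA0 : forall i t, (i < 3)%nat -> 0 < t < T -> G i 0%nat 0%nat 0 t = vcomp i e3)
    by (intros; apply (A0 T v); auto; lra).
  assert (Av0 : forall t, 0 < t < T -> Av G 0 t = (0, 0, 1)).
  { intros t Ht. unfold Av. rewrite !HA0 by (auto; lia). reflexivity. }
  induction M; intros t Ht m Hm.
  - assert (m = 0%nat) by lia. subst m. unfold par. simpl. rewrite !HA0 by (auto; lia). simpl. auto.
  - destruct (Nat.eq_dec m (S M)) as [Em|Em]. 2: apply IHM; auto; lia. subst m.
    destruct (ev_cases (S M)) as [[k [Hk Hev]]|[k [Hk Hev]]].
    +
      set (m0 := (M - 1)%nat).
      assert (Hm0 : Nat.even m0 = true) by (apply (ev_true _ (k - 1)); unfold m0; lia).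
      assert (HW : forall i, (i < 2)%nat -> G i m0 1%nat 0 t = 0).
      { intros i Hi. apply (K7 T v G i m0 0); auto; try lia.
        intros t' Ht'. pose proof (IHM t' Ht' m0 ltac:(unfold m0; lia)) as P. unfold par in P. rewrite Hm0 in P.
        destruct i as [|[|]]; try lia; tauto. }
      assert (HS : forall i, (i < 2)%nat -> vcomp i (cross (Av G 0 t) (Av G (S M) t)) = 0).
      { intros i Hi. rewrite <- (HW i Hi). rewrite (K5 T v G i) by (auto; lia).
        rewrite sum_first. rewrite L_0. replace (m0 - 0 + 2)%nat with (S M) by (unfold m0; lia). ring.
        intros j Hj.
        assert (P1 : par G j t) by (apply IHM; auto; unfold m0 in Hj; lia).
        assert (P2 : par G (m0 - j + 2) t) by (apply IHM; auto; unfold m0 in *; lia).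
        assert (Hs : Nat.even (j + (m0 - j + 2)) = true) by (apply (ev_true _ k); unfold m0 in *; lia).
        destruct (cross_par G _ _ t P1 P2 Hs) as [C0 C1].
        destruct i as [|[|]]; try lia; [rewrite C0 | rewrite C1]; ring. }
      unfold par. rewrite Hev. rewrite Av0 in HS by auto.
      pose proof (HS 0%nat ltac:(lia)) as S0. pose proof (HS 1%nat ltac:(lia)) as S1.
      unfold Av in S0, S1. simpl in S0, S1. split; lra.
    +
      pose proof (K4 T v v0 G HT Hsm Heq Hinit Hunit HG (S M) t ltac:(lia) Ht) as HK.
      rewrite sum_mid in HK; [ | lia | intros j Hj;
        rewrite (dot_par G j (S M - j) t); [ring | apply IHM; auto; lia | apply IHM; auto; lia |
          apply (ev_false _ k); lia]].
      rewrite L_0, L_diag in HK. replace (S M - 0)%nat with (S M) in HK by lia. rewrite Nat.sub_diag in HK.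
      rewrite Av0 in HK by auto. unfold par. rewrite Hev. unfold Av, dot in HK. simpl in HK. lra.
Qed.

Lemma at_T T (G : nat -> nat -> nat -> R -> R -> R) i m : 0 < T -> cont_on_closedQ T (G i m 0%nat) ->
  (forall t, 0 < t < T -> G i m 0%nat 0 t = 0) -> G i m 0%nat 0 T = 0.
Proof. intros HT Hc H. apply (agree T (G i m 0%nat) (fun _ _ => 0) 0 T); auto. apply cq_const. split; simpl; lra.
  intros eps He. assert (0 < Rmin eps T) by (apply Rmin_pos; lra).
  pose proof (Rmin_l eps T). pose proof (Rmin_r eps T).
  exists 0, (T - Rmin eps T / 2). repeat split; simpl; try lra.
  rewrite Rminus_diag, Rabs_R0; lra. rewrite Rabs_left; lra. apply H. lra. Qed.


Lemma get_G T v : smooth_up_to_boundary T v -> exists G, GOK T v G.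
Proof. intros [_ [_ He]].
  assert (Hex : forall i j k, exists g : R -> R -> R, (i < 3)%nat -> cont_on_closedQ T g /\
     forall s t, openQ T (s,t) -> g s t = dsn j (dtn k (vfc i v)) s t).
  { intros i j k. destruct (Nat.lt_ge_cases i 3) as [Hi|Hi].
    - destruct (He i j k Hi) as [g Hg]. exists g; auto.
    - exists (fun _ _ => 0). intros; lia. }
  exists (fun i j k => proj1_sig (constructive_indefinite_description _ (Hex i j k))).
  intros i j k Hi. exact (proj2_sig (constructive_indefinite_description _ (Hex i j k)) Hi).
Qed.

Theorem lemma3p1 (T : R) (v : R -> R -> vec) (v0 : R -> vec) :
  0 < T ->
  smooth_up_to_boundary T v ->
  (forall s t, openQ T (s, t) ->
     forall i : nat, (i < 3)%nat ->
       dt (vfc i v) s t = vcomp i (cross (v s t) (Dsn 2 v s t))) ->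
  (forall s, 0 < s -> v s 0 = v0 s) ->
  (forall t, 0 < t <= T -> v 0 t = e3) ->
  (forall s, 0 <= s -> vnorm (v0 s) = 1) ->
  forall n : nat, (1 <= n)%nat ->
  forall t, 0 < t <= T ->
    (forall i : nat, (i < 3)%nat ->
       trace0_is (fun s => vcomp i (cross (v s t) (Dsn (2 * n) v s t))) 0) /\
    (forall j l : nat, (j + l = 2 * n + 1)%nat ->
       trace0_is (fun s => dot (Dsn j v s t) (Dsn l v s t)) 0).
Proof.
  intros HT Hsm Heq Hinit Hbd Hunit n Hn t Ht.
  destruct (get_G T v Hsm) as [G HG].
  assert (HP : forall m, par G m t).
  { intros m. destruct (Req_dec t T) as [E|E].
    - subst t. unfold par.
      assert (Hall : forall i, (i < 3)%nat -> (forall t', 0 < t' < T -> G i m 0%nat 0 t' = 0) -> G i m 0%nat 0 T = 0).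
      { intros i Hi Hz. apply at_T; auto. apply HG; auto. }
      destruct (Nat.even m) eqn:Em.
      + split; apply Hall; try lia; intros t' Ht'; pose proof (parity T v v0 G HT Hsm Heq Hinit Hbd Hunit HG m t' Ht' m (le_n _)) as P;
        unfold par in P; rewrite Em in P; tauto.
      + apply Hall; try lia; intros t' Ht'; pose proof (parity T v v0 G HT Hsm Heq Hinit Hbd Hunit HG m t' Ht' m (le_n _)) as P;
        unfold par in P; rewrite Em in P; tauto.
    - apply (parity T v v0 G HT Hsm Heq Hinit Hbd Hunit HG m t); auto; lra. }
  assert (Hav0 : Av G 0 t = (0, 0, 1)).
  { unfold Av. rewrite !(A0 T v G) by (auto; lia). reflexivity. }
  assert (TR : forall m, trv (fun s => Dsn m v s t) (Av G m t)) by (intros m; apply (Dsn_trv T v G m t HT Hsm HG Ht)).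
  split.
  - intros i Hi.
    replace 0 with (vcomp i (cross (Av G 0 t) (Av G (2 * n) t))).
    + eapply tr_ext. 2: apply (trv_cross _ _ _ _ (TR 0%nat) (TR (2 * n)%nat) i Hi).
      intros s Hs. cbv beta. rewrite <- v_eta. reflexivity.
    + pose proof (HP (2 * n)%nat) as P. unfold par in P. rewrite (ev_true _ n) in P by lia.
      destruct P as [P0 P1]. rewrite Hav0. unfold Av. rewrite P0, P1.
      destruct i as [|[|[|]]]; simpl; ring.
  - intros j l Hjl.
    replace 0 with (dot (Av G j t) (Av G l t)).
    + apply trv_dot; apply TR.
    + apply dot_par; auto. apply (ev_false _ n). lia.
Qed.
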